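(* For every positive integer $n$ and every $k\in\{0,1,\dots,n\}$, $$\sum_{\substack{J\subseteq[n]\\ |J|=n-k}}\ \prod_{i=1}^n\,[\operatorname{st}^B_i(J)+1]_q\;=\;[2k]!!_q\cdot\operatorname{Stir}^B_q(n,k).$$
   Context: $[m]_q=1+q+\dots+q^{m-1}$ for integers $m\ge1$. The $q$-double factorial is $[m]!!_q=[m]_q[m-2]_q[m-4]_q\cdots$, the product ending at $[1]_q$ or $[2]_q$ according to the parity of $m$, with $[0]!!_q=1$; thus $[2k]!!_q=[2k]_q[2k-2]_q\cdots[2]_q$. The type $B$ $q$-Stirling numbers $\operatorname{Stir}^B_q(n,k)$ are defined by $\operatorname{Stir}^B_q(0,k)=1$ if $k=0$ and $0$ otherwise, and for $n\ge1$ by $\operatorname{Stir}^B_q(n,k)=\operatorname{Stir}^B_q(n-1,k-1)+[2k+1]_q\operatorname{Stir}^B_q(n-1,k)$ (with $\operatorname{Stir}^B_q(n-1,-1)=0$). For $J\subseteq[n]$ and $i\in[n]$, the type $B$ $J$-staircase is $\operatorname{st}^B_i(J)=2\,|\{1,\dots,i-1\}\setminus J|+[i\notin J]$, where $[P]$ is $1$ if $P$ holds and $0$ otherwise. *)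

(* Defs.v *)
From mathcomp Require Import all_boot all_order all_algebra.
Set Implicit Arguments. Unset Strict Implicit. Unset Printing Implicit Defensive.
Import GRing.Theory.
Local Open Scope ring_scope.

(* q is a formal indeterminate: we work in {poly int}, q = 'X. *)

Definition qint (m : nat) : {poly int} := \sum_(i < m) 'X^i.

Fixpoint qdfact (m : nat) : {poly int} :=
  match m with
  | 0 => 1
  | 1 => qint 1
  | (m'.+2) as m0 => qint m0 * qdfact m'
  end.

Fixpoint StirB (n k : nat) : {poly int} :=
  match n with
  | 0 => if k == 0%N then 1 else 0
  | n'.+1 => (match k with 0 => 0 | k'.+1 => StirB n' k' end)
             + qint (2 * k).+1 * StirB n' k
  end.

(* The set [n] = {1,...,n} is represented by 'I_n,
   the ordinal i : 'I_n standing for the integer i+1.  Then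
   {1,...,i} \ J (for the element i+1) is {j : 'I_n | j < i, j \notin J}. *)
Definition stB (n : nat) (J : {set 'I_n}) (i : 'I_n) : nat :=
  (2 * #|[set j : 'I_n | (j < i)%N & j \notin J]| + (i \notin J))%N.

(* Main.v *)
Require Import Defs.
From mathcomp Require Import all_boot all_order all_algebra.
Import GRing.Theory.
Local Open Scope ring_scope.

Lemma liftE n (j : 'I_n) : lift ord_max j = widen_ord (leqnSn n) j.
Proof. by apply: val_inj; rewrite /= /bump leqNgt ltn_ord. Qed.

Lemma card_sum (T : finType) (P : pred T) :
  #|[set x | P x]| = (\sum_(x : T) (P x : nat))%N.
Proof.
rewrite -sum1_card big_mkcond /=; apply: eq_bigr => x _.
by rewrite inE; case: (P x).
Qed.

Definition ext {n} (J : {set 'I_n}) (b : bool) : {set 'I_n.+1} :=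
  [set i : 'I_n.+1 | if unlift ord_max i is Some j then j \in J else b].

Lemma ext_lift n (J : {set 'I_n}) b j : (lift ord_max j \in ext J b) = (j \in J).
Proof. by rewrite inE liftK. Qed.

Lemma ext_max n (J : {set 'I_n}) b : (ord_max \in ext J b) = b.
Proof. by rewrite inE unlift_none. Qed.

Lemma card_ext n (J : {set 'I_n}) b : #|ext J b| = (#|J| + b)%N.
Proof.
have -> : ext J b = [set x | x \in ext J b] by apply/setP=> x; rewrite inE.
rewrite card_sum big_ord_recr /= ext_max.
have -> : J = [set x | x \in J] by apply/setP=> x; rewrite inE.
rewrite card_sum; congr (_ + _)%N; apply: eq_bigr => i _.
by rewrite -liftE ext_lift inE.
Qed.

Lemma stB_lift n (J : {set 'I_n}) b j : stB (ext J b) (lift ord_max j) = stB J j.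
Proof.
rewrite /stB ext_lift !card_sum big_ord_recr /= ext_max.
rewrite [X in (_ < X)%N]/= /bump leqNgt ltn_ord /= add0n.
rewrite ltnNge (ltnW (ltn_ord j)) /= addn0.
congr (2 * _ + _)%N; apply: eq_bigr => i _.
by rewrite -liftE ext_lift.
Qed.

Lemma stB_max n (J : {set 'I_n}) b : stB (ext J b) ord_max = (2 * (n - #|J|) + ~~ b)%N.
Proof.
rewrite /stB ext_max !card_sum big_ord_recr /= ltnn /= addn0.
congr (2 * _ + _)%N.
have <- : #|~: J| = (n - #|J|)%N by rewrite cardsCs card_ord setCK.
have -> : ~: J = [set x | x \notin J] by apply/setP=> x; rewrite !inE.
rewrite card_sum; apply: eq_bigr => i _.
by rewrite -liftE ext_lift ltn_ord.
Qed.

Definition FF {n} (J : {set 'I_n}) : {poly int} := \prod_(i : 'I_n) qint (stB J i).+1.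
Definition BB n k : {poly int} :=
  \sum_(J : {set 'I_n}) if (n - #|J| == k)%N then FF J else 0.

Lemma FF_ext n (J : {set 'I_n}) b :
  FF (ext J b) = FF J * qint (2 * (n - #|J|) + ~~ b).+1.
Proof.
rewrite /FF big_ord_recr /= stB_max; congr (_ * _).
by apply: eq_bigr => i _; rewrite -liftE stB_lift.
Qed.

Lemma sum_ext n (G : {set 'I_n.+1} -> {poly int}) :
  \sum_(J : {set 'I_n.+1}) G J = \sum_(J : {set 'I_n}) (G (ext J true) + G (ext J false)).
Proof.
rewrite (reindex (fun p : {set 'I_n} * bool => ext p.1 p.2)) /=.
  rewrite -(pair_big predT predT (fun J b => G (ext J b))) /=.
  by apply: eq_bigr => J _; rewrite big_bool.
exists (fun J : {set 'I_n.+1} => ([set j | lift ord_max j \in J], ord_max \in J)).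
  move=> [J b] _ /=; congr (_, _); last by rewrite ext_max.
  by apply/setP => j; rewrite inE ext_lift.
move=> J _ /=; apply/setP => i; rewrite inE.
by case: unliftP => [j ->|->]; rewrite ?inE.
Qed.

Lemma BB_rec n k :
  BB n.+1 k = qint (2 * k).+1 * BB n k
     + (if k is k'.+1 then qint (2 * k').+2 * BB n k' else 0).
Proof.
rewrite /BB sum_ext mulr_sumr.
case: k => [|k'].
  rewrite addr0; apply: eq_bigr => J _.
  rewrite !card_ext !FF_ext /= ?addn1 ?addn0 subSS.
  have hJ : (#|J| <= n)%N by rewrite -[X in (_ <= X)%N](card_ord n) max_card.
  rewrite subSn //=.
  case: eqP => [->|_]; last by rewrite addr0 mulr0.
  by rewrite addr0 mulrC.
rewrite mulr_sumr -big_split /=; apply: eq_bigr => J _.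
rewrite !card_ext !FF_ext /= ?addn1 ?addn0 subSS.
have hJ : (#|J| <= n)%N by rewrite -[X in (_ <= X)%N](card_ord n) max_card.
rewrite subSn // eqSS.
congr (_ + _).
  case: eqP => [->|_]; last by rewrite mulr0.
  by rewrite mulrC.
case: eqP => [->|_]; last by rewrite mulr0.
by rewrite mulrC.
Qed.

Lemma BB_main n k : BB n k = qdfact (2 * k) * StirB n k.
Proof.
elim: n k => [|n IH] k.
  rewrite /BB (big_pred1 set0); last first.
    by move=> J; symmetry; apply/eqP/setP => -[].
  rewrite cards0 /FF big_ord0 /=.
  by case: k => [|k] /=; rewrite ?mulr1 ?mulr0.
rewrite BB_rec /=.
case: k => [|k].
  by rewrite !IH addr0 add0r /= mulrCA.
rewrite !IH.
have -> : (2 * k.+1 = (2 * k).+2)%N by rewrite mulnS.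
rewrite /= mulrDr addrC; congr (_ + _).
  by rewrite mulrA.
by rewrite mulrCA.
Qed.

Theorem mainTheorem1 (n k : nat) (hn : (0 < n)%N) (hk : (k <= n)%N) :
  \sum_(J : {set 'I_n} | #|J| == (n - k)%N) \prod_(i : 'I_n) qint (stB J i).+1
  = qdfact (2 * k) * StirB n k.
Proof.
rewrite -BB_main /BB big_mkcond /=; apply: eq_bigr => J _.
have hJ : (#|J| <= n)%N by rewrite -[X in (_ <= X)%N](card_ord n) max_card.
have -> : (#|J| == n - k)%N = (n - #|J| == k)%N.
  apply/eqP/eqP => [->|<-]; by rewrite subKn.
by [].
Qed.
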